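(* Let $M,N$ be $\mathtt{dBang}$ terms with $M\to_S N$ (one surface step). Then for every resource term $m\sqsubset M$, either $m$ reduces to $\emptyset$ in one surface resource step, or there is a resource term $n\sqsubset N$ such that $m$ reduces to $n$ in one surface resource step.
   Context: \textbf{dBang.} Terms: $M,N ::= x \mid \lambda x.M \mid MN \mid M[N/x] \mid\ !M \mid \mathrm{der}\,M$ ($M[N/x]$ explicit substitution binding $x$); $M\{N/x\}$ capture-avoiding substitution. List contexts $L ::= \square\mid L[N/x]$. Root rules: $L\langle\lambda x.M\rangle N \mapsto L\langle M[N/x]\rangle$; $M[L\langle !N\rangle/x]\mapsto L\langle M\{N/x\}\rangle$; $\mathrm{der}(L\langle !N\rangle)\mapsto L\langle N\rangle$. Surface contexts: $S ::= \square\mid\lambda x.S\mid SM\mid MS\mid S[M/x]\mid M[S/x]\mid\mathrm{der}\,S$ (hole not under $!$); $\to_S$ is the closure of the root rules under surface contexts. \textbf{Resources.} Resource terms: $m,n ::= x\mid\lambda x.m\mid mn\mid m[n/x]\mid\mathrm{der}\,m\mid[m_1,\dots,m_k]$ ($k\ge0$ multisets). Resource list contexts $l::=\square\mid l[n/x]$. Root resource rules (target a resource term or the zero symbol $\emptyset$): $\mathrm{der}(l\langle[m]\rangle)\to l\langle m\rangle$; $\mathrm{der}(l\langle[m_1,\dots,m_k]\rangle)\to\emptyset$ if $k\ne1$; $l\langle\lambda x.m\rangle n\to l\langle m[n/x]\rangle$; $m[l\langle[n_1,\dots,n_k]\rangle/x]\to l\langle m\{n_{\sigma(1)}/x_1,\dots,n_{\sigma(k)}/x_k\}\rangle$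 for every permutation $\sigma$ when $x_1,\dots,x_k$ are exactly the $k$ free occurrences of $x$ in $m$, and $\to\emptyset$ when the number of free occurrences of $x$ in $m$ differs from $k$. Surface resource reduction is the closure under resource surface contexts $s::=\square\mid\lambda x.s\mid s n\mid m s\mid s[n/x]\mid m[s/x]\mid\mathrm{der}\,s$ (not inside bags), a term reducing to $\emptyset$ whenever a subterm in surface position does. \textbf{Approximation.} $x\sqsubset x$; $\lambda x.m\sqsubset\lambda x.M$ if $m\sqsubset M$; $mn\sqsubset MN$ and $m[n/x]\sqsubset M[N/x]$ if $m\sqsubset M,n\sqsubset N$; $\mathrm{der}\,m\sqsubset\mathrm{der}\,M$ if $m\sqsubset M$; $[m_1,\dots,m_k]\sqsubset\ !M$ for any $k\ge0$ if every $m_i\sqsubset M$. *)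

(* Defs.v *)
(* dBang calculus and its resource calculus, in de Bruijn syntax
   (terms are thus taken up to alpha-equivalence, as in the paper). *)
From Stdlib Require Import Arith List Permutation.
Import ListNotations.

(* Es M N  represents the explicit substitution  M[N/x]; it binds index 0 in M. *)
Inductive term : Type :=
| Var : nat -> term
| Lam : term -> term
| App : term -> term -> term
| Es  : term -> term -> term
| Bang : term -> term
| Der : term -> term.

Fixpoint lift (k c : nat) (t : term) : term :=
  match t with
  | Var n => if c <=? n then Var (n + k) else Var n
  | Lam t => Lam (lift k (S c) t)
  | App t u => App (lift k c t) (lift k c u)
  | Es t u => Es (lift k (S c) t) (lift k c u)
  | Bang t => Bang (lift k c t)
  | Der t => Der (lift k c t)
  end.

(* capture-avoiding substitution of s for index j (s lives in the context
   outside the j binders crossed); indices above j are decremented *)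
Fixpoint subst (j : nat) (s : term) (t : term) : term :=
  match t with
  | Var n => if n <? j then Var n else if n =? j then lift j 0 s else Var (n - 1)
  | Lam t => Lam (subst (S j) s t)
  | App t u => App (subst j s t) (subst j s u)
  | Es t u => Es (subst (S j) s t) (subst j s u)
  | Bang t => Bang (subst j s t)
  | Der t => Der (subst j s t)
  end.

(* list contexts L = [][N1/x1]...[Nk/xk] represented by [N1; ...; Nk];
   fill L M = L<M> *)
Fixpoint fill (L : list term) (M : term) : term :=
  match L with
  | [] => M
  | N :: L' => fill L' (Es M N)
  end.

Inductive root_step : term -> term -> Prop :=
| root_dB : forall L M N,
    root_step (App (fill L (Lam M)) N) (fill L (Es M (lift (length L) 0 N)))
| root_sb : forall L M N,
    (* M[L<!N>/x] |-> L<M{N/x}> *)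
    root_step (Es M (fill L (Bang N))) (fill L (subst 0 N (lift (length L) 1 M)))
| root_d : forall L N,
    root_step (Der (fill L (Bang N))) (fill L N).

(* closure under surface contexts (never under !) *)
Inductive sstep : term -> term -> Prop :=
| s_root : forall M N, root_step M N -> sstep M N
| s_lam : forall M N, sstep M N -> sstep (Lam M) (Lam N)
| s_appl : forall M N P, sstep M N -> sstep (App M P) (App N P)
| s_appr : forall M N P, sstep M N -> sstep (App P M) (App P N)
| s_esl : forall M N P, sstep M N -> sstep (Es M P) (Es N P)
| s_esr : forall M N P, sstep M N -> sstep (Es P M) (Es P N)
| s_der : forall M N, sstep M N -> sstep (Der M) (Der N).

(* bags [m1,...,mk] are represented by lists; the reduction below allows
   every ordering, so list order is immaterial *)
Inductive rterm : Type :=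
| RVar : nat -> rterm
| RLam : rterm -> rterm
| RApp : rterm -> rterm -> rterm
| REs  : rterm -> rterm -> rterm
| RDer : rterm -> rterm
| RBag : list rterm -> rterm.

Fixpoint rlift (k c : nat) (m : rterm) : rterm :=
  match m with
  | RVar n => if c <=? n then RVar (n + k) else RVar n
  | RLam m => RLam (rlift k (S c) m)
  | RApp m n => RApp (rlift k c m) (rlift k c n)
  | REs m n => REs (rlift k (S c) m) (rlift k c n)
  | RDer m => RDer (rlift k c m)
  | RBag ms => RBag (map (rlift k c) ms)
  end.

Fixpoint rocc (j : nat) (m : rterm) : nat :=
  match m with
  | RVar n => if n =? j then 1 else 0
  | RLam m => rocc (S j) m
  | RApp m n => rocc j m + rocc j n
  | REs m n => rocc (S j) m + rocc j n
  | RDer m => rocc j m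
  | RBag ms => list_sum (map (rocc j) ms)
  end.

(* linear substitution: lsub j ns m m' iff m' = m{n1/x_1,...,nk/x_k} where
   x_1..x_k are the free occurrences of index j in m, in left-to-right order,
   and ns = [n1;...;nk] (each ni used exactly once); indices above j are
   decremented. *)
Inductive lsub (j : nat) : list rterm -> rterm -> rterm -> Prop :=
| ls_var_eq : forall s, lsub j [s] (RVar j) (rlift j 0 s)
| ls_var_lt : forall n, n < j -> lsub j [] (RVar n) (RVar n)
| ls_var_gt : forall n, j < n -> lsub j [] (RVar n) (RVar (n - 1))
| ls_lam : forall ns m m', lsub (S j) ns m m' -> lsub j ns (RLam m) (RLam m')
| ls_app : forall ns1 ns2 m m' n n',
    lsub j ns1 m m' -> lsub j ns2 n n' -> lsub j (ns1 ++ ns2) (RApp m n) (RApp m' n')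
| ls_es : forall ns1 ns2 m m' n n',
    lsub (S j) ns1 m m' -> lsub j ns2 n n' -> lsub j (ns1 ++ ns2) (REs m n) (REs m' n')
| ls_der : forall ns m m', lsub j ns m m' -> lsub j ns (RDer m) (RDer m')
| ls_bag_nil : lsub j [] (RBag []) (RBag [])
| ls_bag_cons : forall ns1 ns2 m m' ms ms',
    lsub j ns1 m m' -> lsub j ns2 (RBag ms) (RBag ms') ->
    lsub j (ns1 ++ ns2) (RBag (m :: ms)) (RBag (m' :: ms')).

Fixpoint rfill (l : list rterm) (m : rterm) : rterm :=
  match l with
  | [] => m
  | n :: l' => rfill l' (REs m n)
  end.

Inductive rroot_step : rterm -> rterm -> Prop :=
| rr_der : forall l m, rroot_step (RDer (rfill l (RBag [m]))) (rfill l m)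
| rr_dB : forall l m n,
    rroot_step (RApp (rfill l (RLam m)) n) (rfill l (REs m (rlift (length l) 0 n)))
| rr_sb : forall l m ns ns' m',
    (* for every permutation sigma of the bag *)
    Permutation ns ns' ->
    lsub 0 ns' (rlift (length l) 1 m) m' ->
    rroot_step (REs m (rfill l (RBag ns))) (rfill l m').

(* root resource rules with target the zero symbol *)
Inductive rroot_zero : rterm -> Prop :=
| rz_der : forall l ms, length ms <> 1 -> rroot_zero (RDer (rfill l (RBag ms)))
| rz_sb : forall l m ns, rocc 0 m <> length ns -> rroot_zero (REs m (rfill l (RBag ns))).

(* surface resource reduction (not inside bags) *)
Inductive rstep : rterm -> rterm -> Prop :=
| r_root : forall m n, rroot_step m n -> rstep m n
| r_lam : forall m n, rstep m n -> rstep (RLam m) (RLam n)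
| r_appl : forall m n p, rstep m n -> rstep (RApp m p) (RApp n p)
| r_appr : forall m n p, rstep m n -> rstep (RApp p m) (RApp p n)
| r_esl : forall m n p, rstep m n -> rstep (REs m p) (REs n p)
| r_esr : forall m n p, rstep m n -> rstep (REs p m) (REs p n)
| r_der : forall m n, rstep m n -> rstep (RDer m) (RDer n).

Inductive rzero : rterm -> Prop :=
| z_root : forall m, rroot_zero m -> rzero m
| z_lam : forall m, rzero m -> rzero (RLam m)
| z_appl : forall m p, rzero m -> rzero (RApp m p)
| z_appr : forall m p, rzero m -> rzero (RApp p m)
| z_esl : forall m p, rzero m -> rzero (REs m p)
| z_esr : forall m p, rzero m -> rzero (REs p m)
| z_der : forall m, rzero m -> rzero (RDer m).

Inductive approx : rterm -> term -> Prop :=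
| ap_var : forall x, approx (RVar x) (Var x)
| ap_lam : forall m M, approx m M -> approx (RLam m) (Lam M)
| ap_app : forall m n M N, approx m M -> approx n N -> approx (RApp m n) (App M N)
| ap_es : forall m n M N, approx m M -> approx n N -> approx (REs m n) (Es M N)
| ap_der : forall m M, approx m M -> approx (RDer m) (Der M)
| ap_bag : forall ms M, Forall (fun m => approx m M) ms -> approx (RBag ms) (Bang M).

(* Main.v *)
Require Import Defs.
From Stdlib Require Import Arith List Permutation Lia.
Import ListNotations.

Lemma approx_lift : forall M m k c, approx m M -> approx (rlift k c m) (lift k c M).
Proof.
  induction M; intros m k c H; inversion H; subst; simpl.
  - match goal with |- context [if ?b then _ else _] => destruct b end; constructor.
  - constructor; auto.
  - constructor; auto.
  - constructor; auto.
  - constructor. clear H. induction H2; simpl; constructor; auto.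
  - constructor; auto.
Qed.

Lemma rocc_rlift : forall m k c j, j < c -> rocc j (rlift k c m) = rocc j m.
Proof.
  fix IH 1. intros m k c j Hj; destruct m; simpl.
  - destruct (c <=? n) eqn:E; simpl; auto.
    apply Nat.leb_le in E. destruct (Nat.eqb_spec (n+k) j); destruct (Nat.eqb_spec n j); lia.
  - apply IH; lia.
  - rewrite !IH by lia; auto.
  - rewrite !IH by lia; auto.
  - apply IH; lia.
  - f_equal. induction l; simpl; auto. rewrite IH by lia. rewrite IHl. auto.
Qed.

Lemma split_list : forall (A:Type) (ns : list A) a b, a + b = length ns ->
  exists ns1 ns2, ns = ns1 ++ ns2 /\ length ns1 = a /\ length ns2 = b.
Proof.
  intros A ns a b H. exists (firstn a ns), (skipn a ns).
  rewrite firstn_skipn. rewrite length_firstn, length_skipn. split; auto; lia.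
Qed.

Lemma Forall_app_inv : forall (A:Type) (P : A -> Prop) l1 l2, Forall P (l1 ++ l2) -> Forall P l1 /\ Forall P l2.
Proof. intros. apply Forall_app in H. auto. Qed.

Lemma subst_key : forall M m j ns N, approx m M -> Forall (fun n => approx n N) ns ->
  rocc j m = length ns -> exists m', lsub j ns m m' /\ approx m' (subst j N M).
Proof.
  induction M; intros m j ns N0 Ha Hns Hocc; inversion Ha; subst; simpl in *.
  - destruct (Nat.eqb_spec n j).
    + subst. destruct ns as [|s [|]]; simpl in Hocc; try lia.
      inversion Hns; subst. exists (rlift j 0 s). split. constructor.
      rewrite Nat.ltb_irrefl. apply approx_lift; auto.
    + destruct ns; simpl in Hocc; try lia.
      destruct (Nat.ltb_spec n j).
      * exists (RVar n); split; [constructor; auto | constructor].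
      * exists (RVar (n-1)); split; [constructor; lia|constructor].
  - edestruct IHM as [m' [H1' H2']]; [eassumption|exact Hns|exact Hocc|]. exists (RLam m'); split; constructor; exact H1' || exact H2'.
  - destruct (split_list _ ns _ _ Hocc) as [n1 [n2 [E [L1 L2]]]]; subst.
    apply Forall_app_inv in Hns as [F1 F2].
    edestruct IHM1 as [a [A1 A2]]; [eassumption|exact F1|exact (eq_sym L1)|].
    edestruct IHM2 as [b [B1 B2]]; [eassumption|exact F2|exact (eq_sym L2)|].
    exists (RApp a b); split; constructor; auto.
  - destruct (split_list _ ns _ _ Hocc) as [n1 [n2 [E [L1 L2]]]]; subst.
    apply Forall_app_inv in Hns as [F1 F2].
    edestruct IHM1 as [a [A1 A2]]; [eassumption|exact F1|exact (eq_sym L1)|].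
    edestruct IHM2 as [b [B1 B2]]; [eassumption|exact F2|exact (eq_sym L2)|].
    exists (REs a b); split; constructor; auto.
  - clear Ha. match goal with HF : Forall (fun _ => approx _ M) _ |- _ => rename HF into HF0 end.
    revert ns Hns Hocc. induction HF0 as [|x xs Hx HF IHForall]; intros ns Hns Hocc; simpl in *.
    + destruct ns; simpl in Hocc; try lia. exists (RBag []); split; constructor; constructor.
    + destruct (split_list _ ns _ _ Hocc) as [n1 [n2 [E [L1 L2]]]]; subst.
      apply Forall_app_inv in Hns as [F1 F2].
      destruct (IHM _ _ _ _ Hx F1 (eq_sym L1)) as [a [A1 A2]].
      destruct (IHForall _ F2 (eq_sym L2)) as [b [B1 B2]].
      inversion B2; subst.
      eexists (RBag (a :: _)); split.
      * econstructor; eauto.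
      * constructor; constructor; auto.
  - edestruct IHM as [m' [H1' H2']]; [eassumption|exact Hns|exact Hocc|]. exists (RDer m'); split; constructor; exact H1' || exact H2'.
Qed.

Lemma approx_fill_inv : forall L P m, approx m (fill L P) ->
  exists l p, m = rfill l p /\ length l = length L /\ approx p P /\ Forall2 approx l L.
Proof.
  induction L; intros P m H; simpl in *.
  - exists [], m; repeat split; auto.
  - destruct (IHL _ _ H) as [l [p [E [Le [Ap F]]]]]. inversion Ap; subst.
    exists (n :: l), m0; simpl; repeat split; auto.
Qed.

Lemma approx_fill : forall l L p P, Forall2 approx l L -> approx p P -> approx (rfill l p) (fill L P).
Proof.
  intros l L p P H; revert p P; induction H; intros; simpl; auto.
  apply IHForall2; constructor; auto.
Qed.

Theorem mainTheorem3 : forall (M N : term), sstep M N ->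
  forall m : rterm, approx m M ->
    rzero m \/ exists n : rterm, approx n N /\ rstep m n.
Proof.
  intros M N H; induction H; intros m Ha.
  - destruct H.
    + inversion Ha; subst.
      match goal with Hh : approx _ (fill _ _) |- _ => destruct (approx_fill_inv _ _ _ Hh) as [l [p [E [Le [Ap F]]]]] end; subst. 
      inversion Ap; subst. right.
      exists (rfill l (REs m (rlift (length l) 0 n))); split.
      * apply approx_fill; auto. constructor; auto. rewrite <- Le. apply approx_lift; auto.
      * apply r_root. apply rr_dB.
    + inversion Ha; subst.
      match goal with Hh : approx _ (fill _ _) |- _ => destruct (approx_fill_inv _ _ _ Hh) as [l [p [E [Le [Ap F]]]]] end; subst. 
      inversion Ap; subst.
      destruct (Nat.eq_dec (rocc 0 m0) (length ms)) as [Eq|Ne].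
      * right.
        assert (Hl : approx (rlift (length l) 1 m0) (lift (length L) 1 M)) by (rewrite Le; apply approx_lift; auto).
        destruct (subst_key _ _ 0 ms N Hl H1 ltac:(rewrite rocc_rlift by lia; exact Eq)) as [m' [A1 A2]].
        exists (rfill l m'); split.
        -- apply approx_fill; auto.
        -- apply r_root. eapply rr_sb; eauto.
      * left. apply z_root. apply rz_sb; auto.
    + inversion Ha; subst.
      match goal with Hh : approx _ (fill _ _) |- _ => destruct (approx_fill_inv _ _ _ Hh) as [l [p [E [Le [Ap F]]]]] end; subst. 
      inversion Ap; subst.
      destruct ms as [|a [|b ms]].
      * left. apply z_root. apply rz_der. simpl; lia.
      * right. match goal with Hh : Forall _ [_] |- _ => inversion Hh; subst end. exists (rfill l a); split.
        -- apply approx_fill; auto.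
        -- apply r_root. apply rr_der.
      * left. apply z_root. apply rz_der. simpl; lia.
  - inversion Ha; subst. match goal with Hh : approx _ M |- _ => destruct (IHsstep _ Hh) as [Z|[n [A S]]] end.
    + left; apply z_lam; auto.
    + right; exists (RLam n); split; [apply ap_lam|apply r_lam]; auto.
  - inversion Ha; subst. match goal with Hh : approx _ M |- _ => destruct (IHsstep _ Hh) as [Z|[n' [A S]]] end.
    + left; apply z_appl; auto.
    + right; eexists; split; [constructor; eauto | apply r_appl; eauto].
  - inversion Ha; subst. match goal with Hh : approx _ M |- _ => destruct (IHsstep _ Hh) as [Z|[n' [A S]]] end.
    + left; apply z_appr; auto.
    + right; eexists; split; [constructor; eauto | apply r_appr; eauto].
  - inversion Ha; subst. match goal with Hh : approx _ M |- _ => destruct (IHsstep _ Hh) as [Z|[n' [A S]]] end.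
    + left; apply z_esl; auto.
    + right; eexists; split; [constructor; eauto | apply r_esl; eauto].
  - inversion Ha; subst. match goal with Hh : approx _ M |- _ => destruct (IHsstep _ Hh) as [Z|[n' [A S]]] end.
    + left; apply z_esr; auto.
    + right; eexists; split; [constructor; eauto | apply r_esr; eauto].
  - inversion Ha; subst. match goal with Hh : approx _ M |- _ => destruct (IHsstep _ Hh) as [Z|[n [A S]]] end.
    + left; apply z_der; auto.
    + right; exists (RDer n); split; [apply ap_der|apply r_der]; auto.
Qed.
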